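(* Let $(X,P,o)$ be a generalized parametric metric space such that $P$ satisfies (P5) and $o$ is continuous. Then every open ball $B(a,\alpha,t)$ ($a\in X$, $\alpha>0$, $t>0$) belongs to $\tau_P$.
   Context: A binary operation $o:[0,\infty)\times[0,\infty)\to[0,\infty)$ (written $\alpha\, o\, \beta$) is assumed to satisfy, for all $\alpha,\beta,\gamma\in[0,\infty)$: (a) $\alpha\, o\, 0=\alpha$; (b) $\alpha\le\beta\implies \alpha\, o\,\gamma\le\beta\, o\,\gamma$; (c) $\alpha\, o\,\gamma=\gamma\, o\,\alpha$; (d) $\alpha\, o\,(\beta\, o\,\gamma)=(\alpha\, o\,\beta)\, o\,\gamma$. It is continuous if whenever $\alpha_n\to\alpha$ and $\beta_n\to\beta$ in $[0,\infty)$ we have $\alpha_n\, o\,\beta_n\to\alpha\, o\,\beta$. A generalized parametric metric on a nonempty set $X$ is a function $P:X\times X\times(0,\infty)\to[0,\infty)$ such that: (P1) $P(a,b,t)=0$ for all $t>0$ if and only if $a=b$; (P2) $P(a,b,t)=P(b,a,t)$ for all $a,b\in X$, $t>0$; (P3) $P(a,b,s+t)\le P(a,x,s)\, o\, P(b,x,t)$ for all $s,t>0$ and $a,b,x\in X$. The triple $(X,P,o)$ is a generalized parametric metric space. Condition (P5): for all $a,b\in X$, the map $t\mapsto P(a,b,t)$ is continuous on $(0,\infty)$. Open ball: $B(a,\alpha,t)=\{b\in X: P(a,b,t)<\alpha\}$. $\tau_P$ is the topology consisting of all $A\subseteq X$ such that for every $a\in A$ there exist $\alpha>0,t>0$ with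 $B(a,\alpha,t)\subseteq A$. *)

(* Defs.v *)
From Stdlib Require Import Reals.
Open Scope R_scope.

(* A binary operation o on [0,oo), represented as o : R -> R -> R whose
   behaviour is only constrained on nonnegative arguments. *)
Definition is_gp_operation (o : R -> R -> R) : Prop :=
  (forall a b, 0 <= a -> 0 <= b -> 0 <= o a b) /\
  (forall a, 0 <= a -> o a 0 = a) /\
  (forall a b c, 0 <= a -> 0 <= b -> 0 <= c -> a <= b -> o a c <= o b c) /\
  (forall a c, 0 <= a -> 0 <= c -> o a c = o c a) /\
  (forall a b c, 0 <= a -> 0 <= b -> 0 <= c -> o a (o b c) = o (o a b) c).

Definition op_continuous (o : R -> R -> R) : Prop :=
  forall (an bn : nat -> R) (a b : R),
    (forall n, 0 <= an n) -> (forall n, 0 <= bn n) -> 0 <= a -> 0 <= b ->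
    Un_cv an a -> Un_cv bn b -> Un_cv (fun n => o (an n) (bn n)) (o a b).

(* P : X -> X -> R -> R, only meaningful for t > 0. *)
Definition is_gen_param_metric {X : Type} (P : X -> X -> R -> R)
  (o : R -> R -> R) : Prop :=
  (forall a b t, 0 < t -> 0 <= P a b t) /\
  (forall a b, (forall t, 0 < t -> P a b t = 0) <-> a = b) /\
  (forall a b t, 0 < t -> P a b t = P b a t) /\
  (forall a b x s t, 0 < s -> 0 < t ->
      P a b (s + t) <= o (P a x s) (P b x t)).

Definition P5 {X : Type} (P : X -> X -> R -> R) : Prop :=
  forall a b t, 0 < t -> continuity_pt (fun s => P a b s) t.

Definition open_ball {X : Type} (P : X -> X -> R -> R) (a : X) (alpha t : R)
  : X -> Prop := fun b => P a b t < alpha.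

Definition in_tauP {X : Type} (P : X -> X -> R -> R) (A : X -> Prop) : Prop :=
  forall a, A a -> exists alpha t, 0 < alpha /\ 0 < t /\
    (forall b, open_ball P a alpha t b -> A b).

(* Main.v *)
Require Import Defs.
From Stdlib Require Import Reals Lra Lia ZArith.
Open Scope R_scope.

Lemma arch_small (e : R) : 0 < e -> exists N : nat, forall n, (N <= n)%nat -> / (INR n + 1) < e.
Proof.
  intros He.
  destruct (archimed (/ e)) as [H1 _].
  assert (Hz : (0 <= up (/ e))%Z).
  { apply le_IZR. assert (0 < / e) by (apply Rinv_0_lt_compat; lra). lra. }
  exists (Z.to_nat (up (/ e))). intros n Hn.
  apply le_INR in Hn. rewrite INR_IZR_INZ, Z2Nat.id in Hn by exact Hz.
  assert (0 < / e) by (apply Rinv_0_lt_compat; lra).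
  assert (Hlt : / e < INR n + 1) by lra.
  rewrite <- (Rinv_inv e). apply Rinv_lt_contravar; [|exact Hlt].
  apply Rmult_lt_0_compat; lra.
Qed.

Lemma cv_inv : Un_cv (fun n => / (INR n + 1)) 0.
Proof.
  intros e He. destruct (arch_small e He) as [N HN]. exists N. intros n Hn.
  unfold R_dist. rewrite Rminus_0_r. pose proof (pos_INR n).
  rewrite Rabs_right. apply HN; lia.
  left; apply Rinv_0_lt_compat; lra.
Qed.

Theorem mainTheorem2 (X : Type) (P : X -> X -> R -> R) (o : R -> R -> R) :
  is_gp_operation o -> op_continuous o -> is_gen_param_metric P o -> P5 P ->
  forall (a : X) (alpha t : R), 0 < alpha -> 0 < t ->
    in_tauP P (open_ball P a alpha t).
Proof.
  intros [Hpos [H0 [Hmon [Hcom Hass]]]] Hoc [Pnn [Pid [Psym Ptri]]] HP5 a alpha t Ha Ht.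
  intros b Hb. unfold open_ball in Hb.
  set (s := fun n : nat => t * / (INR n + 2)).
  assert (Hs : forall n, 0 < s n /\ s n < t).
  { intro n. pose proof (pos_INR n). unfold s. split.
    - apply Rmult_lt_0_compat; [lra|apply Rinv_0_lt_compat; lra].
    - rewrite <- (Rmult_1_r t) at 2. apply Rmult_lt_compat_l; [lra|].
      rewrite <- Rinv_1. apply Rinv_lt_contravar; lra. }
  set (an := fun n => P a b (t - s n)).
  set (bn := fun n : nat => / (INR n + 1)).
  assert (Hcva : Un_cv an (P a b t)).
  { intros e He. destruct (HP5 a b t Ht e He) as [d [Hd Hc]].
    destruct (arch_small (d / t)) as [N HN].
    { apply Rdiv_lt_0_compat; lra. }
    exists N. intros n Hn. unfold an. apply (Hc (t - s n)). destruct (Hs n) as [Hs1 Hs2]. split; [split; [exact I| lra]|].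
    simpl. unfold R_dist.
    replace (t - s n - t) with (- s n) by ring. rewrite Rabs_Ropp, Rabs_right by lra.
    specialize (HN n Hn). pose proof (pos_INR n).
    assert (s n <= t * / (INR n + 1)).
    { unfold s. apply Rmult_le_compat_l; [lra|]. apply Rlt_le, Rinv_lt_contravar; [apply Rmult_lt_0_compat|]; lra. }
    assert (t * / (INR n + 1) < t * (d / t)) by (apply Rmult_lt_compat_l; lra).
    replace (t * (d / t)) with d in * by (field; lra). lra. }
  assert (Hann : forall n, 0 <= an n).
  { intro n. unfold an. apply Pnn. destruct (Hs n); lra. }
  assert (Hbnn : forall n, 0 <= bn n).
  { intro n. unfold bn. pose proof (pos_INR n). left; apply Rinv_0_lt_compat; lra. }
  assert (Hb0 : 0 <= P a b t) by (apply Pnn; lra).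
  pose proof (Hoc an bn (P a b t) 0 Hann Hbnn Hb0 (Rle_refl 0) Hcva cv_inv) as Hcv.
  rewrite H0 in Hcv by exact Hb0.
  destruct (Hcv (alpha - P a b t)) as [N HN]; [lra|].
  specialize (HN N (le_n N)). unfold R_dist in HN.
  apply Rabs_def2 in HN. destruct HN as [HN _].
  exists (bn N), (s N). destruct (Hs N) as [Hs1 Hs2].
  split; [unfold bn; pose proof (pos_INR N); apply Rinv_0_lt_compat; lra|].
  split; [exact Hs1|].
  intros c Hc. unfold open_ball in *.
  replace t with ((t - s N) + s N) at 1 by ring.
  eapply Rle_lt_trans. apply (Ptri a c b); lra.
  rewrite (Psym c b) by lra.
  assert (Hc0 : 0 <= P b c (s N)) by (apply Pnn; lra).
  assert (o (an N) (P b c (s N)) <= o (an N) (bn N)).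
  { rewrite (Hcom (an N)), (Hcom (an N) (bn N)) by auto.
    apply Hmon; auto. lra. }
  unfold an in *. lra.
Qed.
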